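(* Let $d\ge k\ge1$, $A\in\mathbb{R}^{d\times k}$ with $A^TA=I_k$, $\beta\in(0,1)$, and $\theta^*=\sqrt{1-\beta}\,AA^T$. Let $m\in\{0,1\}^d$ be a mask and put $\lambda_{\max}:=\|AA^TD(m)\|$ (spectral norm). Let $x_0\in\mathbb{R}^d$ be any point in the column space of $A$ (the known image), and let $x_1\in\mathbb{R}^d$ be arbitrary (e.g. a draw from $\mathcal N(0,I_d)$). Define the resampling iterates $$x_0^{(0)}=\tfrac{1}{\sqrt{1-\beta}}\theta^*x_1=AA^Tx_1,\qquad x_0^{(r)}=\tfrac{1}{\sqrt{1-\beta}}\theta^*\big(D(m)\,x_0^{(r-1)}+D(\mathbf 1-m)\,x_0\big)\quad(r\ge1).$$ Then for every $r\ge 0$, $$\|x_0^{(r)}-x_0\|\le \lambda_{\max}^r\,\frac{\|\theta^*\|\,\|x_1-x_0\|}{\sqrt{1-\beta}}.$$ Consequently, if $0<\lambda_{\max}<1$ (in particular $AA^TD(m)\prec I_d$ in the sense $\lambda_{\max}<1$) and $\epsilon>0$, then $\|x_0^{(r)}-x_0\|\le\epsilon$ for all $$r\ \ge\ \frac{\log\!\Big(\frac{\|\theta^*\|\,\|x_1-x_0\|}{\epsilon\sqrt{1-\beta}}\Big)}{\log(1/\lambda_{\max})},$$ i.e. the number of resampling steps needed for an $\epsilon$-accurate inpainting is $\mathcal O\big(\log(\|\theta^*\|\|x_1-x_0\|/(\epsilon\sqrt{1-\beta}))/\log(1/\lambda_{\max})\big)$, independently of which valid mask $m$ is used. *)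

(* Defs.v *)
From HB Require Import structures.
From mathcomp Require Import all_boot all_order all_algebra.
From mathcomp Require Import all_classical all_reals.
From mathcomp Require Import exp.
Set Implicit Arguments. Unset Strict Implicit. Unset Printing Implicit Defensive.
Import Order.TTheory GRing.Theory Num.Theory.
Local Open Scope ring_scope.
Local Open Scope classical_set_scope.

Definition enorm {R : realType} {n : nat} (x : 'cV[R]_n) : R :=
  Num.sqrt (\sum_(i < n) x i 0 ^+ 2).

Definition specnorm {R : realType} {m n : nat} (M : 'M[R]_(m, n)) : R :=
  sup [set enorm (M *m x) | x in [set x : 'cV[R]_n | enorm x <= 1]].

Definition Dmx {R : realType} {n : nat} (v : 'cV[R]_n) : 'M[R]_n := diag_mx v^T.

Definition theta_star {R : realType} {d k : nat} (A : 'M[R]_(d, k)) (beta : R)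
  : 'M[R]_d := Num.sqrt (1 - beta) *: (A *m A^T).

Fixpoint resample {R : realType} {d k : nat} (A : 'M[R]_(d, k)) (beta : R)
  (m x0 x1 : 'cV[R]_d) (r : nat) : 'cV[R]_d :=
  match r with
  | 0 => (Num.sqrt (1 - beta))^-1 *: (theta_star A beta *m x1)
  | r'.+1 => (Num.sqrt (1 - beta))^-1 *:
      (theta_star A beta *m (Dmx m *m resample A beta m x0 x1 r'
                             + Dmx (const_mx 1 - m) *m x0))
  end.

(* Main.v *)
Require Import Defs.
From HB Require Import structures.
From mathcomp Require Import all_boot all_order all_algebra.
From mathcomp Require Import all_classical all_reals.
From mathcomp Require Import exp.
From mathcomp Require Import ring.
Import Order.TTheory GRing.Theory Num.Theory.
Local Open Scope ring_scope.

Section H.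
Variable R : realType.

Lemma enorm_ge0 {n} (x : 'cV[R]_n) : 0 <= enorm x.
Proof. exact: sqrtr_ge0. Qed.

Lemma enorm0 {n} : enorm (0 : 'cV[R]_n) = 0.
Proof. by rewrite /enorm big1 ?sqrtr0 // => i _; rewrite mxE expr0n. Qed.

Lemma enormZ {n} (a : R) (x : 'cV[R]_n) : enorm (a *: x) = `|a| * enorm x.
Proof.
rewrite /enorm.
under eq_bigr => i _ do rewrite mxE exprMn.
by rewrite -mulr_sumr sqrtrM ?sqr_ge0 // sqrtr_sqr.
Qed.

Lemma enorm_coord {n} (x : 'cV[R]_n) j : `|x j 0| <= enorm x.
Proof.
rewrite -sqrtr_sqr /enorm ler_sqrt; last by apply: sumr_ge0 => i _; exact: sqr_ge0.
rewrite (bigD1 j) //= lerDl; apply: sumr_ge0 => i _; exact: sqr_ge0.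
Qed.

Lemma enorm_bound {n} (x : 'cV[R]_n) (a : 'I_n -> R) :
  (forall i, `|x i 0| <= a i) -> enorm x <= Num.sqrt (\sum_i a i ^+ 2).
Proof.
move=> H; rewrite /enorm ler_sqrt; last by apply: sumr_ge0 => i _; exact: sqr_ge0.
apply: ler_sum => i _.
rewrite -(real_normK (num_real (x i 0))) !expr2.
by apply: ler_pM => //; apply: H.
Qed.

Lemma spec_has_sup {m n} (M : 'M[R]_(m, n)) :
  has_sup [set enorm (M *m x) | x in [set x : 'cV[R]_n | enorm x <= 1]].
Proof.
split.
  exists (enorm (M *m 0)), 0 => //=.
  by rewrite /enorm big1 ?sqrtr0 // => i _; rewrite mxE expr0n.
exists (Num.sqrt (\sum_i (\sum_j `|M i j|) ^+ 2)) => _ [x /= Hx <-].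
apply: enorm_bound => i; rewrite mxE.
rewrite (le_trans (ler_norm_sum _ _ _)) //.
apply: ler_sum => j _.
rewrite normrM -[X in _ <= X]mulr1; apply: ler_wpM2l => //.
by apply: le_trans Hx; apply: enorm_coord.
Qed.

Lemma specnorm_ge0 {m n} (M : 'M[R]_(m, n)) : 0 <= specnorm M.
Proof.
have H := sup_upper_bound (spec_has_sup M).
have -> : (0:R) = enorm (M *m 0).
  by rewrite mulmx0 /enorm big1 ?sqrtr0 // => i _; rewrite mxE expr0n.
apply: H; exists 0 => //=.
by rewrite /enorm big1 ?sqrtr0 // => i _; rewrite mxE expr0n.
Qed.

Lemma specnorm_le {m n} (M : 'M[R]_(m, n)) (y : 'cV[R]_n) :
  enorm (M *m y) <= specnorm M * enorm y.
Proof.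
have [y0|ny] := eqVneq (enorm y) 0.
  have -> : y = 0.
    apply/matrixP => i j; rewrite (ord1 j) mxE; apply/eqP.
    by rewrite -normr_le0; move: (enorm_coord y i); rewrite y0.
  by rewrite mulmx0 !enorm0 mulr0.
have yp : 0 < enorm y by rewrite lt_def ny enorm_ge0.
have H := sup_upper_bound (spec_has_sup M).
have : enorm (M *m ((enorm y)^-1 *: y)) <= specnorm M.
  apply: H; exists ((enorm y)^-1 *: y) => //=.
  by rewrite enormZ ger0_norm ?invr_ge0 ?enorm_ge0 // mulVf.
rewrite -scalemxAr enormZ ger0_norm ?invr_ge0 ?enorm_ge0 //.
by rewrite mulrC -ler_pdivlMr ?invr_gt0 // invrK.
Qed.

End H.

Theorem theorem2 (R : realType) (d k : nat) (A : 'M[R]_(d, k)) (beta : R)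
  (m x0 x1 : 'cV[R]_d)
  (hk : (1 <= k)%N) (hkd : (k <= d)%N)
  (hA : A^T *m A = 1%:M)
  (hbeta0 : 0 < beta) (hbeta1 : beta < 1)
  (hm : forall i, m i 0 = 0 \/ m i 0 = 1)
  (hx0 : exists z : 'cV[R]_k, x0 = A *m z) :
  let lmax := specnorm (A *m A^T *m Dmx m) in
  (forall r : nat,
     enorm (resample A beta m x0 x1 r - x0)
       <= lmax ^+ r * (specnorm (theta_star A beta) * enorm (x1 - x0))
                      / Num.sqrt (1 - beta)) /\
  (0 < lmax -> lmax < 1 -> forall eps : R, 0 < eps ->
     forall r : nat,
       ln (specnorm (theta_star A beta) * enorm (x1 - x0)
             / (eps * Num.sqrt (1 - beta))) / ln (lmax^-1) <= r%:R ->
       enorm (resample A beta m x0 x1 r - x0) <= eps).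
Proof.
move=> lmax.
set s := Num.sqrt (1 - beta).
have sp : 0 < s by rewrite sqrtr_gt0 subr_gt0.
set P := A *m A^T.
have Px0 : P *m x0 = x0.
  by case: hx0 => z ->; rewrite /P -!mulmxA (mulmxA _ A) hA mul1mx.
have thP : forall v : 'cV[R]_d, s^-1 *: (theta_star A beta *m v) = P *m v.
  by move=> v; rewrite /theta_star -/s -/P -(scalemxAl s) scalerA mulVf ?scale1r // gt_eqF.
have e0 : resample A beta m x0 x1 0 - x0 = P *m (x1 - x0).
  by rewrite /= thP mulmxBr Px0.
have eS : forall r, resample A beta m x0 x1 r.+1 - x0 =
    (P *m Dmx m) *m (resample A beta m x0 x1 r - x0).
  move=> r; rewrite [resample _ _ _ _ _ r.+1]/= thP.
  set u := resample _ _ _ _ _ r.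
  have -> : Dmx m *m u + Dmx (const_mx 1 - m) *m x0 = Dmx m *m (u - x0) + x0.
    apply/matrixP => i j; rewrite /Dmx !mul_diag_mx !mxE.
    by rewrite (ord1 j); ring.
  by rewrite mulmxDr Px0 addrK mulmxA.
have lmax0 : 0 <= lmax by exact: specnorm_ge0.
set C := specnorm (theta_star A beta) * enorm (x1 - x0).
have C0 : 0 <= C by rewrite mulr_ge0 ?specnorm_ge0 ?enorm_ge0.
have part1 : forall r, enorm (resample A beta m x0 x1 r - x0) <= lmax ^+ r * C / s.
  elim=> [|r IH].
    have si : 0 <= s^-1 by rewrite invr_ge0 ltW.
    rewrite e0 expr0 mul1r -thP enormZ ger0_norm // mulrC ler_wpM2r //.
    exact: specnorm_le.
  rewrite eS; apply: le_trans; first exact: specnorm_le.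
  have -> : specnorm (P *m Dmx m) = lmax by [].
  by rewrite exprS -!mulrA ler_wpM2l //; move: IH; rewrite /C !mulrA.
split => // lpos l1 eps epos r Hr.
apply: le_trans; first exact: part1.
have [Cz|Cnz] := eqVneq C 0.
  by rewrite Cz mulr0 mul0r ltW.
have Cp : 0 < C by rewrite lt_def Cnz C0.
have lnp : 0 < ln (lmax^-1) by apply: ln_gt0; rewrite invf_gt1.
move: Hr; rewrite ler_pdivrMr // mulr_natl -lnXn ?invr_gt0 //.
have es : 0 < eps * s by rewrite mulr_gt0.
have q1 : C / (eps * s) \in Num.pos by rewrite posrE divr_gt0.
have q2 : lmax^-1 ^+ r \in Num.pos by rewrite posrE exprn_gt0 // invr_gt0.
rewrite -/C ler_ln //.
rewrite exprVn ler_pdivrMr // => H.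
rewrite ler_pdivrMr // -(@ler_pM2l _ (lmax ^- r)) ?invr_gt0 ?exprn_gt0 //.
rewrite mulrA mulVf ?mul1r // gt_eqF // exprn_gt0 //.
Qed.
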